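(* Let $X$ be the Fermi surface (at time $0$) of a geodesic observer in anti-de Sitter space-time with cosmological constant $\lambda<0$, identified via global Fermi coordinates with $\mathbb{R}^3$, $\rho=|x|$, with space-time metric $ds^2=-c^2\cosh^2(a\rho)dt^2+d\rho^2+a^{-2}\sinh^2(a\rho)(d\theta^2+\sin^2\theta\,d\phi^2)$, $a=\sqrt{|\lambda|/3}$. For $\beta>0$, $z>0$, particle mass $m>0$ and bounded Borel $\Lambda\subset X$, let the ideal gas partition function be $$Z_\Lambda(\varnothing)=e^{-\beta|\Lambda|\rho_{\text{vac}}}\sum_{n\ge0}\frac{z^n}{n!}\Big(\int_\Lambda\frac{K_2(\gamma(x))}{\gamma(x)}d\mathbf{x}\Big)^n,\qquad \gamma(x)=\beta mc^2\cosh(a\rho),$$ with $\rho_{\text{vac}}=\lambda c^4/(8\pi G)$. Let $\Lambda_k$ be the ball of radius $k$ centered at the origin. Then the infinite volume pressure $P=\lim_{k\to\infty}\frac{\log Z_{\Lambda_k}(\varnothing)}{\beta|\Lambda_k|}$ exists and $$P=-\frac{\lambda c^4}{8\pi G}.$$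
   Context: $K_2$ is the modified Bessel function of the second kind, $c$ is the speed of light and $G$ Newton's gravitational constant. $d\mathbf{x}=dx^1dx^2dx^3$ is Lebesgue measure in the Fermi coordinates, while $|\Lambda|$ denotes the Riemannian volume of $\Lambda$ for the induced metric $d\rho^2+a^{-2}\sinh^2(a\rho)(d\theta^2+\sin^2\theta d\phi^2)$ on $X$ (balls are taken with respect to the radial coordinate $\rho$, which is proper distance from the origin). *)

(* Defs.v *)
From HB Require Import structures.
From mathcomp Require Import all_boot all_order all_algebra.
From mathcomp Require Import all_classical all_reals all_analysis.
Set Implicit Arguments. Unset Strict Implicit. Unset Printing Implicit Defensive.
Import Order.TTheory GRing.Theory Num.Theory numFieldNormedType.Exports.
Local Open Scope classical_set_scope.
Local Open Scope ring_scope.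

Section AdS.
Variable R : realType.

Definition coshR (x : R) : R := (expR x + expR (- x)) / 2.
Definition sinhR (x : R) : R := (expR x - expR (- x)) / 2.

Definition besselK2 (x : R) : R :=
  \int[@lebesgue_measure R]_(t in `[0%R, +oo[%classic)
     (expR (- (x * coshR t)) * coshR (2 * t)).

Definition R3 := ((R * R) * R)%type.

Definition leb3 := ((@lebesgue_measure R \x @lebesgue_measure R)
                    \x @lebesgue_measure R)%E.

Definition rad (p : R3) : R := Num.sqrt (p.1.1 ^+ 2 + p.1.2 ^+ 2 + p.2 ^+ 2).

Definition ballO (k : R) : set R3 := [set p | rad p <= k].

(* density of the Riemannian volume of the metric
   d rho^2 + a^-2 sinh^2(a rho) dOmega^2 w.r.t. Lebesgue measure in
   the Fermi coordinates: (sinh(a rho)/(a rho))^2, equal to 1 at rho = 0 *)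
Definition vol_density (a : R) (p : R3) : R :=
  if rad p == 0 then 1 else (sinhR (a * rad p) / (a * rad p)) ^+ 2.

Definition riem_vol (a : R) (L : set R3) : R :=
  \int[leb3]_(p in L) vol_density a p.

Definition gammaF (a beta m c : R) (p : R3) : R :=
  beta * m * c ^+ 2 * coshR (a * rad p).

Definition partition_fn (a beta z m c rho_vac : R) (L : set R3) : R :=
  let I := \int[leb3]_(p in L)
             (besselK2 (gammaF a beta m c p) / gammaF a beta m c p) in
  expR (- (beta * riem_vol a L * rho_vac)) *
  limn (series (fun n : nat => z ^+ n / (n`!)%:R * I ^+ n)).

End AdS.

(* Main.v *)
Require Import Defs.
From HB Require Import structures.
From mathcomp Require Import all_boot all_order all_algebra.
From mathcomp Require Import all_classical all_reals all_analysis.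
From mathcomp Require Import ring lra measurable_realfun exponential_distribution.
Import Order.TTheory GRing.Theory Num.Theory numFieldNormedType.Exports.
Set Implicit Arguments. Unset Strict Implicit.
Local Open Scope classical_set_scope.
Local Open Scope ring_scope.

Lemma le_int_T d (T : measurableType d) (R : realType) (mu : measure T R)
  (f g : T -> \bar R) : (forall x, (0 <= f x)%E) -> (forall x, (f x <= g x)%E) ->
  (\int[mu]_x f x <= \int[mu]_x g x)%E.
Proof.
move=> f0 fg.
have g0 : forall x, (0 <= g x)%E by move=> x; exact: le_trans (f0 x) (fg x).
rewrite !ge0_integralTE//.
apply: le_ereal_sup => _ [h hf <-]; exists h => //= x.
exact: le_trans (hf x) (fg x).
Qed.

Lemma fine_between (R : realType) (e : \bar R) (u : R) :
  (0 <= e)%E -> (e <= u%:E)%E -> 0 <= fine e <= u.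
Proof.
by case: e => [r| |] //=; rewrite !lee_fin => -> ->.
Qed.

Section Reals.
Variable R : realType.

Lemma expN_bound (y : R) : 0 < y -> expR (- y) <= 27 / y ^+ 3.
Proof.
move=> y0.
have E3 : expR y = expR (y / 3) ^+ 3 by rewrite -expRM_natl; congr expR; field.
have h1 := expR_ge1Dx (y / 3).
have h2 : (y / 3) ^+ 3 <= expR y.
  rewrite E3; apply: lerXn2r; rewrite ?nnegrE ?expR_ge0 ?divr_ge0 ?ltW//.
  lra.
have hF : expR (- y) * expR y = 1 by rewrite -expRD addNr expR0.
have F0 := expR_ge0 (- y).
rewrite ler_pdivlMr ?exprn_gt0//.
nra.
Qed.


Lemma coshR_ge1 (x : R) : 1 <= coshR x.
Proof.
rewrite /coshR expRN; set E := expR x.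
have E0 : 0 < E := expR_gt0 x.
have hE : E * E^-1 = 1 by rewrite mulfV// gt_eqF.
have Ei0 : 0 < E^-1 by rewrite invr_gt0.
have h : 0 <= (E - 1) ^+ 2 * E^-1 by apply: mulr_ge0; rewrite ?sqr_ge0 ?ltW.
have h2 : (E - 1) ^+ 2 * E^-1 = E - 2 + E^-1.
  have -> : (E - 1) ^+ 2 * E^-1 = E * (E * E^-1) - 2 * (E * E^-1) + E^-1 by ring.
  by rewrite hE; ring.
rewrite ler_pdivlMr//; lra.
Qed.

Lemma k2_integrand_bound (x t : R) : 0 < x -> 0 <= t ->
  expR (- (x * coshR t)) * coshR (2 * t) <= 216 / x ^+ 3 * expR (- t).
Proof.
move=> x0 t0.
have E1 := expR_ge1Dx t.
set E := expR t in E1.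
have E0 : 0 < E := expR_gt0 t.
have Ei0 : 0 < E^-1 by rewrite invr_gt0.
have hE : E * E^-1 = 1 by rewrite mulfV// gt_eqF.
have c2 : coshR (2 * t) <= E ^+ 2.
  have e2t : expR (2 * t) = E ^+ 2 by rewrite -expRM_natl.
  rewrite /coshR expRN e2t.
  have e2 : 1 <= E ^+ 2 by nra.
  have ei : (E ^+ 2)^-1 <= 1 by rewrite invf_le1 ?exprn_gt0.
  lra.
have c1 : x * E / 2 <= x * coshR t.
  rewrite /coshR expRN -/E; nra.
have A1 : expR (- (x * coshR t)) <= expR (- (x * E / 2)).
  by rewrite ler_expR lerN2.
have A2 := @expN_bound (x * E / 2) ltac:(nra).
set A := expR (- (x * coshR t)) in A1 *.
have A0 : 0 <= A by apply: expR_ge0.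
have A3 : A * (x * E / 2) ^+ 3 <= 27.
  by rewrite -ler_pdivlMr ?exprn_gt0 ?divr_gt0 ?mulr_gt0//; exact: le_trans A1 A2.
rewrite expRN -/E.
apply: (@le_trans _ _ (A * E ^+ 2)); first exact: ler_wpM2l.
have -> : A * E ^+ 2 = (A * (x * E / 2) ^+ 3) * 8 / x ^+ 3 * E^-1.
  by field; rewrite ?gt_eqF// exprn_gt0.
apply: ler_wpM2r; first exact: ltW.
apply: ler_wpM2r; first by rewrite invr_ge0 exprn_ge0// ltW.
lra.
Qed.


Lemma besselK2_bound (x : R) : 0 < x -> 0 <= besselK2 x <= 216 / x ^+ 3.
Proof.
move=> x0; rewrite /besselK2; apply: fine_between.
  apply: integral_ge0 => t _; rewrite lee_fin mulr_ge0 ?expR_ge0//.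
  exact: le_trans ler01 (coshR_ge1 _).
rewrite integral_mkcond.
apply: (@le_trans _ _ (\int[lebesgue_measure]_t ((216 / x ^+ 3) * exponential_pdf 1 t)%:E)%E).
  apply: le_int_T.
    move=> t; rewrite patchE; case: ifP => // _.
    rewrite lee_fin mulr_ge0 ?expR_ge0//.
    exact: le_trans ler01 (coshR_ge1 _).
  move=> t; rewrite /exponential_pdf !patchE.
  case: ifP => tD.
    rewrite lee_fin mul1r mulN1r; apply: k2_integrand_bound => //.
    by move: tD; rewrite inE /= in_itv /= andbT.
  by rewrite mulr0.
under eq_integral do rewrite EFinM.
rewrite ge0_integralZl_EFin//.
- by rewrite integral_exponential_pdf// mule1.
- by move=> t _; rewrite lee_fin exponential_pdf_ge0.
- by apply/measurable_EFinP; exact: measurable_exponential_pdf.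
- by rewrite divr_ge0// exprn_ge0// ltW.
Qed.


Definition itvc (l u : R) : set R := [set` `[l, u]].
Definition cube (l u : R) : set (R3 R) := (itvc l u `*` itvc l u) `*` itvc l u.

Lemma measurable_cube l u : measurable (cube l u).
Proof.
rewrite /cube /itvc; apply: measurableX; first apply: measurableX.
all: exact: measurable_itv.
Qed.

Lemma leb3_cube l u : l < u -> @leb3 R (cube l u) = ((u - l) ^+ 3)%:E.
Proof.
move=> lu; have mi : measurable (itvc l u) by exact: measurable_itv.
rewrite /leb3 /cube.
rewrite (@product_measure1E _ _ _ _ _ (lebesgue_measure \x lebesgue_measure)%E lebesgue_measure); last 2 first.
  exact: measurableX.
  done.
have h := @product_measure1E _ _ _ _ _ lebesgue_measure lebesgue_measure (itvc l u) (itvc l u) mi mi.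
apply: (@eq_trans _ _ (lebesgue_measure (itvc l u) * lebesgue_measure (itvc l u) * lebesgue_measure (itvc l u))%E).
  by congr (_ * _)%E; exact: h.
rewrite /itvc lebesgue_measure_itv /= lte_fin lu -EFinB.
by rewrite -!EFinM; congr EFin; ring.
Qed.


Lemma int_upper (f : R3 R -> R) (L Q : set (R3 R)) (M : R) :
  measurable Q -> L `<=` Q -> (forall p, L p -> 0 <= f p <= M) -> 0 <= M ->
  (0 <= \int[@leb3 R]_(p in L) (f p)%:E <= M%:E * @leb3 R Q)%E.
Proof.
move=> mQ LQ fM M0; apply/andP; split.
  by apply: integral_ge0 => p /fM /andP[h _]; rewrite lee_fin.
rewrite [X in (X <= _)%E]integral_mkcond -integral_cst//.
rewrite [X in (_ <= X)%E]integral_mkcond.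
apply: le_int_T => p; rewrite !patchE.
  by case: ifP => // /[!inE] /fM /andP[h _]; rewrite lee_fin.
case: (boolP (p \in L)) => [/[!inE] Lp | _].
  rewrite ifT; last by rewrite inE; exact: LQ.
  by rewrite lee_fin /=; case/andP: (fM _ Lp).
by case: ifP => _; rewrite lee_fin.
Qed.


Lemma int_lower (f : R3 R -> R) (L Q : set (R3 R)) (c : R) :
  measurable Q -> Q `<=` L -> (forall p, L p -> 0 <= f p) ->
  (forall p, Q p -> c <= f p) -> 0 <= c ->
  (c%:E * @leb3 R Q <= \int[@leb3 R]_(p in L) (f p)%:E)%E.
Proof.
move=> mQ QL f0 fc c0.
rewrite -integral_cst// [X in (X <= _)%E]integral_mkcond.
rewrite [X in (_ <= X)%E]integral_mkcond.
apply: le_int_T => p; rewrite !patchE.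
  by case: ifP => // _; rewrite lee_fin.
case: (boolP (p \in Q)) => [/[!inE] Qp | _].
  rewrite ifT; last by rewrite inE; exact: QL.
  by rewrite lee_fin /=; exact: fc.
by case: ifP => [/[!inE] /f0|_]; rewrite lee_fin.
Qed.


Lemma sinh_facts (x : R) : 0 < x -> x ^+ 2 / 8 <= sinhR x <= x * expR x.
Proof.
move=> x0; rewrite /sinhR.
have hEF : expR x * expR (- x) = 1 by rewrite -expRD subrr expR0.
have F1 := expR_ge1Dx (- x).
have E1 := expR_ge1Dx x.
have F0 := expR_ge0 (- x).
have E2 : expR x = expR (x / 2) ^+ 2 by rewrite -expRM_natl; congr expR; field.
have h2 := expR_ge1Dx (x / 2).
have E3 : (1 + x / 2) ^+ 2 <= expR x.
  by rewrite E2; apply: lerXn2r; rewrite ?nnegrE; lra.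
set E := expR x in hEF E1 E2 E3 *; set F := expR (- x) in hEF F1 F0 *.
apply/andP; split; nra.
Qed.

Lemma rad_sq (p : R3 R) : Defs.rad p ^+ 2 = p.1.1 ^+ 2 + p.1.2 ^+ 2 + p.2 ^+ 2 /\ 0 <= Defs.rad p.
Proof.
split; last exact: sqrtr_ge0.
by rewrite /rad sqr_sqrtr// !addr_ge0// sqr_ge0.
Qed.

Lemma ball_in_cube (k : R) (p : R3 R) : 0 <= k -> Defs.rad p <= k -> cube (- k) k p.
Proof.
move=> k0 rk; have [rs r0] := rad_sq p.
move: rs r0 rk; set r := Defs.rad p => rs r0 rk.
have hs : p.1.1 ^+ 2 + p.1.2 ^+ 2 + p.2 ^+ 2 <= k ^+ 2 by rewrite -rs; nra.
have s1 := sqr_ge0 p.1.1; have s2 := sqr_ge0 p.1.2; have s3 := sqr_ge0 p.2.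
rewrite /cube /itvc /=; split; [split|]; rewrite /= in_itv /=; apply/andP; split; nra.
Qed.

Lemma cube_in_ball (k : R) (p : R3 R) : 0 < k -> cube (k / 4) (k / 2) p ->
  k / 4 <= Defs.rad p <= k.
Proof.
move=> k0; rewrite /cube /itvc /= !in_itv /= => -[[/andP[a1 a2] /andP[b1 b2]] /andP[c1 c2]].
have [rs r0] := rad_sq p.
move: rs r0; set r := Defs.rad p => rs r0.
have h1 : 3 * (k / 4) ^+ 2 <= r ^+ 2 by rewrite rs; nra.
have h2 : r ^+ 2 <= 3 * (k / 2) ^+ 2 by rewrite rs; nra.
apply/andP; split; nra.
Qed.


Lemma dens_upper (a k : R) (p : R3 R) : 0 < a -> 0 <= k -> Defs.rad p <= k ->
  0 <= vol_density a p <= expR (a * k) ^+ 2.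
Proof.
move=> a0 k0 rk; have [_ r0] := rad_sq p.
have ak0 : 0 <= a * k by exact: mulr_ge0 (ltW a0) k0.
have Ek : 1 <= expR (a * k) by have := expR_ge1Dx (a * k); lra.
rewrite /vol_density; case: ifP => [_|/negbT rn0].
  by apply/andP; split => //; nra.
have rp : 0 < Defs.rad p by rewrite lt_neqAle eq_sym rn0 r0.
have x0 : 0 < a * Defs.rad p by exact: mulr_gt0.
have /andP[s1 s2] := sinh_facts x0.
set x := a * Defs.rad p in x0 s1 s2 *.
have q0 : 0 <= sinhR x / x by rewrite divr_ge0 ?ltW//; nra.
have q1 : sinhR x / x <= expR (a * k).
  rewrite ler_pdivrMr//; apply: (le_trans s2).
  rewrite mulrC; apply: ler_wpM2r; first exact: ltW.
  by rewrite ler_expR /x ler_pM2l.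
apply/andP; split; first exact: exprn_ge0.
by apply: lerXn2r; rewrite ?nnegrE//; exact: le_trans q0 q1.
Qed.

Lemma dens_lower (a k : R) (p : R3 R) : 0 < a -> 0 < k -> k / 4 <= Defs.rad p ->
  (a * k / 32) ^+ 2 <= vol_density a p.
Proof.
move=> a0 k0 rk; have [_ r0] := rad_sq p.
have rp : 0 < Defs.rad p by apply: lt_le_trans rk; rewrite divr_gt0.
rewrite /vol_density ifF; last by rewrite gt_eqF.
have x0 : 0 < a * Defs.rad p by exact: mulr_gt0.
have xk : a * k / 4 <= a * Defs.rad p by rewrite -mulrA ler_wpM2l// ltW.
have /andP[s1 s2] := sinh_facts x0.
set x := a * Defs.rad p in x0 s1 s2 xk *.
have q1 : x / 8 <= sinhR x / x.
  rewrite ler_pdivlMr// mulrAC ler_pdivrMr//; nra.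
have h0 : 0 <= a * k / 32 by rewrite divr_ge0 ?mulr_ge0 ?ltW.
have q2 : a * k / 32 <= sinhR x / x by lra.
by apply: lerXn2r; rewrite ?nnegrE//; exact: le_trans h0 q2.
Qed.


Lemma fine_lb (l u : R) (e : \bar R) : (l%:E <= e)%E -> (e <= u%:E)%E -> l <= fine e.
Proof. by case: e => [r| |] //=; rewrite !lee_fin. Qed.

Lemma f_bound (a beta m c : R) (p : R3 R) : 0 < beta * m * c ^+ 2 ->
  0 <= besselK2 (gammaF a beta m c p) / gammaF a beta m c p
    <= 216 / (beta * m * c ^+ 2) ^+ 4.
Proof.
move=> g0; set g := gammaF a beta m c p.
have gg : beta * m * c ^+ 2 <= g.
  rewrite /g /gammaF -[X in X <= _]mulr1; apply: ler_wpM2l; first exact: ltW.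
  exact: coshR_ge1.
have gp : 0 < g by exact: lt_le_trans gg.
have /andP[k0 k1] := besselK2_bound gp.
apply/andP; split; first by rewrite divr_ge0// ltW.
rewrite ler_pdivrMr//.
apply: (le_trans k1).
have E : forall G : R, 0 < G -> 216 / G ^+ 4 * g = 216 / g ^+ 3 * (g ^+ 4 / G ^+ 4).
  by move=> G G0; field; rewrite !gt_eqF.
rewrite E//.
rewrite -[X in X <= _]mulr1; apply: ler_wpM2l.
  by rewrite divr_ge0 ?exprn_ge0// ltW.
rewrite ler_pdivlMr ?exprn_gt0// mul1r.
by apply: lerXn2r => //; rewrite nnegrE; apply: ltW.
Qed.


Lemma step (a beta z m c rho K : R) : 0 < a -> 0 < beta -> 0 < z ->
  0 < beta * m * c ^+ 2 -> 0 < K ->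
  0 <= ln (partition_fn a beta z m c rho (ballO K)) / (beta * riem_vol a (ballO K)) + rho
    <= z * (216 / (beta * m * c ^+ 2) ^+ 4) * 8 * 64 * 1024 / (beta * a ^+ 2) / K ^+ 2.
Proof.
move=> a0 b0 z0 g0 K0.
set B := 216 / (beta * m * c ^+ 2) ^+ 4.
have B0 : 0 <= B by rewrite divr_ge0// exprn_ge0// ltW.
set EV := (\int[@leb3 R]_(p in ballO K) (vol_density a p)%:E)%E.
set EI := (\int[@leb3 R]_(p in ballO K)
   (besselK2 (gammaF a beta m c p) / gammaF a beta m c p)%:E)%E.
have sub1 : cube (K / 4) (K / 2) `<=` ballO K.
  by move=> p /(cube_in_ball K0) /andP[_ h].
have sub2 : ballO K `<=` cube (- K) K.
  by move=> p; apply: ball_in_cube (ltW K0).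
have hlow := @int_lower (vol_density a) (ballO K) (cube (K / 4) (K / 2))
  ((a * K / 32) ^+ 2) (measurable_cube _ _) sub1
  (fun p Lp => proj1 (andP (dens_upper a0 (ltW K0) Lp)))
  (fun p Qp => dens_lower a0 K0 (proj1 (andP (cube_in_ball K0 Qp))))
  (exprn_ge0 _ (divr_ge0 (mulr_ge0 (ltW a0) (ltW K0)) (ler0n _ 32))).
have hup := @int_upper (vol_density a) (ballO K) (cube (- K) K)
  (expR (a * K) ^+ 2) (measurable_cube _ _) sub2
  (fun p Lp => dens_upper a0 (ltW K0) Lp) (exprn_ge0 _ (expR_ge0 _)).
have hI := @int_upper (fun p => besselK2 (gammaF a beta m c p) / gammaF a beta m c p)
  (ballO K) (cube (- K) K) B (measurable_cube _ _) sub2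
  (fun p _ => f_bound a p g0) B0.
have l1 : K / 4 < K / 2 by lra.
have l2 : - K < K by lra.
rewrite !leb3_cube// -!EFinM in hlow hup hI.
move: hup => /andP[_ hup]; move: hI => /andP[hI0 hI1].
set lowV := (a * K / 32) ^+ 2 * (K / 2 - K / 4) ^+ 3 in hlow.
have Vlow : lowV <= fine EV by exact: fine_lb hlow hup.
have /andP[I0 I1] := fine_between hI0 hI1.
have lowV0 : 0 < lowV by rewrite mulr_gt0 ?exprn_gt0 ?mulr_gt0 ?divr_gt0//; lra.
have hZ : partition_fn a beta z m c rho (ballO K) =
    expR (- (beta * fine EV * rho)) * expR (z * fine EI).
  rewrite /partition_fn /=; congr (_ * _).
  rewrite /expR; congr (limn (series _)); apply/funext => n /=.
  by rewrite /exp_coeff /= exprMn [RHS]mulrAC.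
rewrite hZ -expRD expRK.
have V0 : 0 < fine EV by exact: lt_le_trans Vlow.
have -> : (- (beta * fine EV * rho) + z * fine EI) / (beta * riem_vol a (ballO K)) + rho
    = z * fine EI / (beta * fine EV).
  have hV : riem_vol a (ballO K) = fine EV by [].
  rewrite hV; field; rewrite ?gt_eqF//.
set I := fine EI in I0 I1 *; set V := fine EV in Vlow V0 *.
have D0 : 0 < beta * lowV by exact: mulr_gt0.
set X := z * (B * (K - - K) ^+ 3) / (beta * lowV).
have K3 : 0 <= (K - - K) ^+ 3 by apply: exprn_ge0; lra.
have X0 : 0 <= X.
  apply: divr_ge0; last exact: ltW.
  by apply: mulr_ge0; [exact: ltW|exact: mulr_ge0].
have XD : X * (beta * lowV) = z * (B * (K - - K) ^+ 3) by rewrite /X divfK// gt_eqF.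
have zI : z * I <= z * (B * (K - - K) ^+ 3) by rewrite ler_pM2l.
have DD : beta * lowV <= beta * V by rewrite ler_pM2l.
apply/andP; split.
  apply: divr_ge0; first exact: mulr_ge0 (ltW z0) I0.
  exact: mulr_ge0 (ltW b0) (ltW V0).
apply: (@le_trans _ _ X).
  rewrite ler_pdivrMr ?mulr_gt0//; nra.
rewrite /X /lowV /B le_eqVlt; apply/orP; left; apply/eqP.
have hg : beta * m * c ^+ 2 != 0 by rewrite gt_eqF.
move: hg; rewrite !mulf_eq0.
rewrite !negb_or => /andP[/andP[hb hm] /andP[hc _]].
have hk : K * 4 + - K * 2 != 0 by rewrite gt_eqF //; lra.
by field; rewrite hb hm hc hk (gt_eqF K0) (gt_eqF a0).
Qed.

End Reals.

Lemma harm_bound (R : realType) (C : R) (k : nat) : 0 <= C -> (0 < k)%N ->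
  C / k%:R ^+ 2 <= 2 * C * harmonic k.
Proof.
move=> C0 k0; rewrite /harmonic /=.
have e : (k.+1)%:R = k%:R + 1 :> R by rewrite -addn1 natrD.
rewrite e.
have K1 : 1 <= k%:R :> R by rewrite ler1n.
set K := k%:R in K1 *.
have K0 : 0 < K by lra.
rewrite ler_pdivrMr ?exprn_gt0//.
have -> : 2 * C * (K + 1)^-1 * K ^+ 2 = C * (2 * K ^+ 2 / (K + 1)).
  by field; rewrite gt_eqF//; lra.
apply: ler_peMr => //.
by rewrite ler_pdivlMr; nra.
Qed.

Unset Implicit Arguments. Set Strict Implicit.

Theorem corollary2 (R : realType) (c G lambda beta z m : R) :
  0 < c -> 0 < G -> lambda < 0 -> 0 < beta -> 0 < z -> 0 < m ->
  let a := Num.sqrt (`|lambda| / 3) in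
  let rho_vac := lambda * c ^+ 4 / (8 * pi * G) in
  (fun k : nat =>
     ln (partition_fn a beta z m c rho_vac (ballO k%:R)) /
     (beta * riem_vol a (ballO k%:R)))
    @ \oo --> - (lambda * c ^+ 4 / (8 * pi * G)).
Proof.
move=> c0 G0 l0 b0 z0 m0 a rho.
have a0 : 0 < a by rewrite sqrtr_gt0 divr_gt0// normr_gt0 lt_eqF.
have g0 : 0 < beta * m * c ^+ 2 by rewrite !mulr_gt0// exprn_gt0.
set C := z * (216 / (beta * m * c ^+ 2) ^+ 4) * 8 * 64 * 1024 / (beta * a ^+ 2).
have C0 : 0 <= C.
  have h1 : 0 <= 216 / (beta * m * c ^+ 2) ^+ 4 by rewrite divr_ge0// exprn_ge0// ltW.
  have z1 := ltW z0.
  have b1 := ltW b0.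
  apply: divr_ge0; last exact: mulr_ge0 b1 (exprn_ge0 _ (ltW a0)).
  exact: (mulr_ge0 (mulr_ge0 (mulr_ge0 (mulr_ge0 z1 h1) (ler0n _ 8)) (ler0n _ 64)) (ler0n _ 1024)).
pose q k := ln (partition_fn a beta z m c rho (ballO (k%:R : R))) /
     (beta * riem_vol a (ballO (k%:R : R))).
change (q x @[x --> \oo] --> - (lambda * c ^+ 4 / (8 * pi * G))).
have hq : forall k, (0 < k)%N -> 0 <= q k + rho <= C / k%:R ^+ 2.
  by move=> k k0; apply: step => //; rewrite ltr0n.
have e : q = (fun k => (q k + rho) + (- rho)) by apply/funext => k; rewrite addrK.
rewrite e.
suff h1 : (fun k => q k + rho) @ \oo --> (0 : R).
  have h2 := @cvgD _ _ _ \oo _ _ _ _ _ h1 (@cvg_cst _ (- rho) nat \oo _).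
  rewrite add0r in h2.
  exact: h2.
apply: (squeeze_cvgr (f := fun=> (0 : R)) (h := fun k => (2 * C) * harmonic k)).
- exists 1%N => // k /= k1.
  have /andP[h1 h2] := hq k k1.
  by rewrite h1 /=; apply: le_trans h2 (harm_bound C0 k1).
- exact: cvg_cst.
- rewrite -(mulr0 (2 * C)); apply: cvgM; [exact: cvg_cst|exact: cvg_harmonic].
Qed.
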